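(* Suppose $U=\{(u,v,x): (u,x)\in V,\ v\in\mathbb{R}\}$ with $V$ a connected open set. Let $X = X_1 n + X_2\ell+\sum_i X_i m_i$ be a Killing vector field of $g$ on $U$ that is nowhere spacelike, i.e. $g(X,X)\le 0$ at every point of $U$ (for all values of $v$). Then: - $X_1$ is a constant $c$; - $X = c\,n + F_2\,\ell + \sum_i F_i\, m_i$, where $F_2,F_i$ are functions of $(u,x^3,\dots,x^N)$ only; - $2cF_2 + \sum_i F_i^2 \le 0$ on $V$.
   Context: Work on an open set $U$ with coordinates $(u,v,x^3,\dots,x^N)$, $N\ge 3$. The Lorentzian metric is $$g = 2\,du\,\big(dv + H\,du + \hat W_e\,dx^e\big) + g_{ef}\,dx^e dx^f,$$ where the indices $e,f$ run over $3,\dots,N$ and are summed. The functions $H,\hat W_e,g_{ef}$ depend only on $(u,x^3,\dots,x^N)$, not on $v$, and $(g_{ef})$ is positive definite. Then $\ell=\partial_v$ is a covariantly constant null vector. Choose functions $m^i_{\ e}(u,x)$, $i,e\in\{3,\dots,N\}$, with $g_{ef}=\sum_i m^i_{\ e}m^i_{\ f}$, and let $m_i^{\ e}$ be the inverse matrix, so that $\sum_e m^i_{\ e}m_j^{\ e}=\delta_{ij}$. The coframe is $m^1 = dv + H\,du+\hat W_e\,dx^e$, $m^2=du$, $m^i = m^i_{\ e}dx^e$, so that $g = 2m^1m^2+\sum_i (m^i)^2$. The dual frame vectors are $$\ell=\partial_v,\qquad n=\partial_u - H\,\partial_v,\qquad m_i = m_i^{\ e}\big(\partial_e-\hat W_e\,\partial_v\big).$$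 For a vector field $X$ we write $X = X_1 n + X_2\ell+\sum_i X_i m_i$. Equivalently $X_1=g(X,\ell)$, $X_2=g(X,n)$, $X_i=g(X,m_i)$, and $g(X,X)=2X_1X_2+\sum_i X_i^2$. *)

(* Defs.v *)
From mathcomp Require Import all_boot.
From Stdlib Require Import Reals.
Set Implicit Arguments.
Unset Strict Implicit.
Open Scope R_scope.

(* n = N - 2 transverse coordinates x^3..x^N, indexed by 'I_n. *)
Inductive coord (n : nat) : Type := Cu | Cv | Cx (e : 'I_n).
Arguments Cu {n}.
Arguments Cv {n}.
Arguments Cx {n} e.

Definition coord_eqb (n : nat) (a b : coord n) : bool :=
  match a, b with
  | Cu, Cu => true
  | Cv, Cv => true
  | Cx e, Cx f => e == f
  | _, _ => false
  end.

Definition point (n : nat) := coord n -> R.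

Definition upd (n : nat) (p : point n) (a : coord n) (t : R) : point n :=
  fun b => if coord_eqb a b then t else p b.

Definition has_partial (n : nat) (f : point n -> R) (a : coord n) (p : point n) (l : R)
  : Prop := derivable_pt_lim (fun t => f (upd p a t)) (p a) l.

Definition xsum (n : nat) (F : 'I_n -> R) : R := \big[Rplus/0]_(e < n) F e.
Definition csum (n : nat) (F : coord n -> R) : R := F Cu + F Cv + xsum (fun e => F (Cx e)).

Definition open_set (n : nat) (S : point n -> Prop) : Prop :=
  forall p, S p -> exists eps, 0 < eps /\
    forall q, (forall a, Rabs (q a - p a) < eps) -> S q.

Definition continuous_on (n : nat) (S : point n -> Prop) (f : point n -> R) : Prop :=
  forall p, S p -> forall eps, 0 < eps -> exists delta, 0 < delta /\
    forall q, (forall a, Rabs (q a - p a) < delta) -> Rabs (f q - f p) < eps.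

(* C^infinity on S: f is continuous on S, all first partial derivatives exist
   on S, and they are again C^infinity on S. *)
CoInductive smooth_on (n : nat) (S : point n -> Prop) (f : point n -> R) : Prop :=
  Smooth_on : continuous_on S f ->
    (forall a, exists df : point n -> R,
        (forall p, S p -> has_partial f a p (df p)) /\ smooth_on S df) ->
    smooth_on S f.

Definition open_set_ux (n : nat) (V : R -> ('I_n -> R) -> Prop) : Prop :=
  forall u x, V u x -> exists eps, 0 < eps /\
    forall u' x', Rabs (u' - u) < eps -> (forall e, Rabs (x' e - x e) < eps) -> V u' x'.

Definition connected_ux (n : nat) (V : R -> ('I_n -> R) -> Prop) : Prop :=
  forall A B : R -> ('I_n -> R) -> Prop,
    open_set_ux A -> open_set_ux B ->
    (forall u x, V u x -> A u x \/ B u x) ->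
    (forall u x, V u x -> A u x -> B u x -> False) ->
    (forall u x, V u x -> A u x) \/ (forall u x, V u x -> B u x).

Definition xof (n : nat) (p : point n) : 'I_n -> R := fun e => p (Cx e).
Definition lift_ux (n : nat) (f : R -> ('I_n -> R) -> R) : point n -> R :=
  fun p => f (p Cu) (xof p).

Definition Uof (n : nat) (V : R -> ('I_n -> R) -> Prop) : point n -> Prop :=
  fun p => V (p Cu) (xof p).

(* Metric components g_ab of
   g = 2 du (dv + H du + W_e dx^e) + g_ef dx^e dx^f. *)
Definition gcomp (n : nat) (H : R -> ('I_n -> R) -> R) (W : 'I_n -> R -> ('I_n -> R) -> R)
  (gm : 'I_n -> 'I_n -> R -> ('I_n -> R) -> R) (a b : coord n) (p : point n) : R :=
  match a, b with
  | Cu, Cu => 2 * H (p Cu) (xof p)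
  | Cu, Cv | Cv, Cu => 1
  | Cv, Cv => 0
  | Cu, Cx e | Cx e, Cu => W e (p Cu) (xof p)
  | Cv, Cx _ | Cx _, Cv => 0
  | Cx e, Cx f => gm e f (p Cu) (xof p)
  end.

Definition gval (n : nat) (H : R -> ('I_n -> R) -> R) (W : 'I_n -> R -> ('I_n -> R) -> R)
  (gm : 'I_n -> 'I_n -> R -> ('I_n -> R) -> R) (p : point n) (Y Z : coord n -> R) : R :=
  csum (fun a => csum (fun b => gcomp H W gm a b p * Y a * Z b)).

(* Frame vectors, as coordinate components:
   l = d_v,  n = d_u - H d_v,  m_i = m_i^e (d_e - W_e d_v). *)
Definition lvec (n : nat) : coord n -> R :=
  fun a => match a with Cv => 1 | _ => 0 end.
Definition nvec (n : nat) (H : R -> ('I_n -> R) -> R) (p : point n) : coord n -> R :=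
  fun a => match a with Cu => 1 | Cv => - H (p Cu) (xof p) | Cx _ => 0 end.
Definition mvec (n : nat) (W : 'I_n -> R -> ('I_n -> R) -> R)
  (minv : 'I_n -> 'I_n -> R -> ('I_n -> R) -> R) (i : 'I_n) (p : point n)
  : coord n -> R :=
  fun a => match a with
           | Cu => 0
           | Cv => - xsum (fun e => minv i e (p Cu) (xof p) * W e (p Cu) (xof p))
           | Cx e => minv i e (p Cu) (xof p)
           end.

(* Killing equation (L_X g)_{ab} = X^c d_c g_ab + g_cb d_a X^c + g_ac d_b X^c = 0
   at every point of S. *)
Definition killing_on (n : nat) (S : point n -> Prop)
  (gc : coord n -> coord n -> point n -> R) (X : coord n -> point n -> R) : Prop :=
  forall p, S p -> exists (DX : coord n -> coord n -> R) (Dg : coord n -> coord n -> coord n -> R),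
    (forall a c, has_partial (X c) a p (DX a c)) /\
    (forall c a b, has_partial (gc a b) c p (Dg c a b)) /\
    (forall a b, csum (fun c => X c p * Dg c a b + gc c b p * DX a c + gc a c p * DX b c) = 0).

(* Main.v *)
Set Warnings "-notation-overridden -redundant-canonical-projection".
Require Import Defs.
From HB Require Import structures.
From mathcomp Require Import all_boot.
From Stdlib Require Import Reals Lra Psatz Classical FunctionalExtensionality.
Open Scope R_scope.
Set Implicit Arguments.
Unset Strict Implicit.

Lemma Rplus_assoc' : associative Rplus. Proof. move=> x y z; ring. Qed.
HB.instance Definition _ := Monoid.isComLaw.Build R 0 Rplus Rplus_assoc' Rplus_comm Rplus_0_l.

Lemma xsum_ext n (F G : 'I_n -> R) : (forall e, F e = G e) -> xsum F = xsum G.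
Proof. move=> h; rewrite /xsum; apply: eq_bigr => e _; exact: h. Qed.

Lemma xsum_add n (F G : 'I_n -> R) : xsum (fun e => F e + G e) = xsum F + xsum G.
Proof. by rewrite /xsum big_split. Qed.

Lemma xsum_scal n (a : R) (F : 'I_n -> R) : xsum (fun e => a * F e) = a * xsum F.
Proof.
rewrite /xsum; apply: (big_rec2 (fun y1 y2 => y1 = a * y2)); first by ring.
by move=> i y1 y2 _ ->; ring.
Qed.

Lemma xsum0 n : xsum (fun _ : 'I_n => 0) = 0.
Proof. by rewrite /xsum big1. Qed.

Lemma xsum_swap n (F : 'I_n -> 'I_n -> R) :
  xsum (fun e => xsum (fun f => F e f)) = xsum (fun f => xsum (fun e => F e f)).
Proof. by rewrite /xsum exchange_big. Qed.

Lemma xsum_nonneg n (F : 'I_n -> R) : (forall e, 0 <= F e) -> 0 <= xsum F.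
Proof.
move=> h; rewrite /xsum; apply: (big_ind (fun y => 0 <= y)) => //.
- by apply: Rle_refl.
- by move=> x y hx hy; lra.
Qed.

Unset Implicit Arguments.

Lemma xsum_scalr n (a : R) (F : 'I_n -> R) : xsum (fun e => F e * a) = xsum F * a.
Proof. rewrite Rmult_comm -xsum_scal; apply: xsum_ext => e; ring. Qed.

Lemma quadform n (G M : 'I_n -> 'I_n -> R) (z : 'I_n -> R) :
  (forall e f, G e f = xsum (fun i => M i e * M i f)) ->
  xsum (fun e => xsum (fun f => G e f * z e * z f)) =
  xsum (fun i => (xsum (fun e => M i e * z e)) ^ 2).
Proof.
move=> hG.
transitivity (xsum (fun e => xsum (fun i => xsum (fun f => M i e * z e * (M i f * z f))))).
  apply: xsum_ext => e; rewrite xsum_swap; apply: xsum_ext => f.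
  rewrite hG -!xsum_scalr; apply: xsum_ext => i; ring.
rewrite xsum_swap; apply: xsum_ext => i.
rewrite /= Rmult_1_r -xsum_scalr; apply: xsum_ext => e.
rewrite xsum_scal //.
Qed.

Lemma xsum_sq_nonneg n (F : 'I_n -> R) : 0 <= xsum (fun i => F i ^ 2).
Proof. apply: xsum_nonneg => i; nra. Qed.

Lemma xsum_sq_zero n (F : 'I_n -> R) : xsum (fun i => F i ^ 2) = 0 -> forall i, F i = 0.
Proof.
move=> h i.
have : F i ^ 2 + xsum (fun j => if j == i then 0 else F j ^ 2) = 0.
  rewrite -h /xsum [in RHS](bigD1 i) //=; congr (_ + _).
  rewrite [in RHS]big_mkcond /=; apply: eq_bigr => j _; by case: (j == i).
have : 0 <= xsum (fun j => if j == i then 0 else F j ^ 2).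
  apply: xsum_nonneg => j; case: (j == i); [lra | nra].
move=> h1 h2; nra.
Qed.

Lemma posdef_inj n (G M : 'I_n -> 'I_n -> R) (z : 'I_n -> R) :
  (forall e f, G e f = xsum (fun i => M i e * M i f)) ->
  (forall y : 'I_n -> R, (exists e, y e <> 0) -> 0 < xsum (fun e => xsum (fun f => G e f * y e * y f))) ->
  (forall i, xsum (fun e => M i e * z e) = 0) -> forall e, z e = 0.
Proof.
move=> hG hpos hz e; apply: NNPP => ne.
have := hpos z (ex_intro _ e ne); rewrite (@quadform n G M z hG).
rewrite (@xsum_ext _ _ (fun _ => 0)) ?xsum0; first lra.
by move=> i; rewrite hz; ring.
Qed.

Lemma posdef_inj2 n (G : 'I_n -> 'I_n -> R) (z : 'I_n -> R) :
  (forall y : 'I_n -> R, (exists e, y e <> 0) -> 0 < xsum (fun e => xsum (fun f => G e f * y e * y f))) ->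
  (forall e, xsum (fun f => G f e * z f) = 0) -> forall e, z e = 0.
Proof.
move=> hpos hz e; apply: NNPP => ne.
have := hpos z (ex_intro _ e ne); rewrite xsum_swap.
rewrite (@xsum_ext _ _ (fun _ => 0)) ?xsum0; first lra.
move=> f; rewrite -(Rmult_0_l (z f)) -(hz f) -xsum_scalr; apply: xsum_ext => e'; ring.
Qed.

Lemma deriv_local (f g : R -> R) x l eps : 0 < eps ->
  (forall s, Rabs (s - x) < eps -> f s = g s) ->
  derivable_pt_lim f x l -> derivable_pt_lim g x l.
Proof.
move=> he hfg hf eps' heps'.
have [d hd] := hf eps' heps'.
have hm : 0 < Rmin d eps by apply: Rmin_pos => //; apply: cond_pos.
exists (mkposreal _ hm) => h hh0 hh /=.
have h1 : Rabs h < d by apply: (Rlt_le_trans _ _ _ hh); apply: Rmin_l.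
have h2 : Rabs h < eps by apply: (Rlt_le_trans _ _ _ hh); apply: Rmin_r.
rewrite -!hfg; first exact: hd.
- by rewrite Rminus_diag Rabs_R0.
- by replace (x + h - x) with h by ring.
Qed.

Lemma deriv_unique_local (f g : R -> R) x l1 l2 eps : 0 < eps ->
  (forall s, Rabs (s - x) < eps -> f s = g s) ->
  derivable_pt_lim f x l1 -> derivable_pt_lim g x l2 -> l1 = l2.
Proof.
move=> he hfg h1 h2; apply: (uniqueness_limite g x) => //.
exact: (@deriv_local f g x l1 eps he hfg h1).
Qed.

Lemma const_interval (f : R -> R) c eps :
  (forall t, Rabs (t - c) < eps -> derivable_pt_lim f t 0) ->
  forall a b, Rabs (a - c) < eps -> Rabs (b - c) < eps -> f a = f b.
Proof.
move=> hd.
suff key : forall a b, a <= b -> Rabs (a - c) < eps -> Rabs (b - c) < eps -> f a = f b.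
  move=> a b ha hb; case: (Rle_lt_dec a b) => hab; first exact: key.
  symmetry; apply: key => //; lra.
move=> a b hab ha hb.
have inI : forall x, a <= x <= b -> Rabs (x - c) < eps.
  move=> x hx; move: ha hb; rewrite /Rabs; do 3 case: Rcase_abs; lra.
pose pr := fun x (P : a < x < b) => exist (fun l => derivable_pt_abs f x l) 0 (hd x (inI x (conj (Rlt_le _ _ (proj1 P)) (Rlt_le _ _ (proj2 P))))).
have := @null_derivative_loc f a b pr.
move=> H; symmetry; apply: H.
- move=> x hx; apply: derivable_continuous_pt.
  exists 0; exact: hd _ (inI x hx).
- by move=> x P.
- lra.
Qed.

Lemma const_line (f : R -> R) : (forall t, derivable_pt_lim f t 0) -> forall a b, f a = f b.
Proof.
move=> hd a b.
apply: (@const_interval f a (Rabs (b - a) + 1)) => //.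
- rewrite Rminus_diag Rabs_R0; move: (Rabs_pos (b - a)); lra.
- lra.
Qed.

Lemma quad_nonpos A B C : (forall t, A + B * t + C * (t * t) <= 0) -> C <= 0 /\ (C = 0 -> B = 0).
Proof.
move=> h; split.
- apply: Rnot_lt_le => hC.
  have hA := Rabs_pos A; have hB := Rabs_pos B.
  have hi : 0 < / C by apply: Rinv_0_lt_compat.
  pose K := Rabs B + Rabs A + 1.
  have hK : 0 < K * / C by apply: Rmult_lt_0_compat => //; rewrite /K; lra.
  pose t := K * / C + 1.
  have hCt : C * t = K + C.
    by rewrite /t Rmult_plus_distr_l -Rmult_assoc (Rmult_comm C) Rmult_assoc Rinv_r; lra.
  have ht : 1 <= t by rewrite /t; lra.
  have h1 : C * (t * t) = (K + C) * t by rewrite -Rmult_assoc hCt.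
  have h2 : - (Rabs B * t) <= B * t.
    have := Rle_abs (-B); rewrite Rabs_Ropp => hb.
    have : - B * t <= Rabs B * t by apply: Rmult_le_compat_r; lra.
    lra.
  have h3 : K * t >= K by rewrite /K; nra.
  have h4 : C * t > 0 by nra.
  have := h t; rewrite h1.
  have := Rle_abs (-A); rewrite Rabs_Ropp.
  rewrite /K in h3 *; nra.
- move=> hC; subst C; apply: NNPP => hB.
  have := h ((Rabs A + 1) / B); rewrite Rmult_0_l Rplus_0_r.
  rewrite /Rdiv (Rmult_comm (Rabs A + 1)) -Rmult_assoc Rinv_r //.
  have := Rle_abs (-A); rewrite Rabs_Ropp; lra.
Qed.

From Stdlib Require Import List.
Set Implicit Arguments.
Unset Strict Implicit.

Lemma coord_eqb_refl n (a : coord n) : coord_eqb a a = true.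
Proof. by case: a => //= e; rewrite eqxx. Qed.

Lemma coord_eqb_true n (a b : coord n) : coord_eqb a b = true -> a = b.
Proof. by case: a; case: b => //= e f /eqP ->. Qed.

Lemma upd_same n (p : point n) a t : upd p a t a = t.
Proof. by rewrite /upd coord_eqb_refl. Qed.

Lemma upd_upd n (p : point n) a s t : upd (upd p a s) a t = upd p a t.
Proof.
apply: functional_extensionality => b; rewrite /upd.
by case: (coord_eqb a b).
Qed.

Lemma upd_id n (p : point n) a : upd p a (p a) = p.
Proof.
apply: functional_extensionality => b; rewrite /upd.
by case E: (coord_eqb a b) => //; rewrite (coord_eqb_true E).
Qed.

Lemma upd_other n (p : point n) a b t : a <> b -> upd p a t b = p b.
Proof.
move=> ne; rewrite /upd; case E: (coord_eqb a b) => //.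
by case: ne; apply: coord_eqb_true.
Qed.

Lemma upd_comm n (p : point n) a b s t : a <> b -> upd (upd p a s) b t = upd (upd p b t) a s.
Proof.
move=> ne; apply: functional_extensionality => c; rewrite /upd.
case E1: (coord_eqb a c); case E2: (coord_eqb b c) => //.
by case: ne; rewrite (coord_eqb_true E1) (coord_eqb_true E2).
Qed.

Lemma partial_line n (f : point n -> R) a p t d :
  has_partial f a (upd p a t) d -> derivable_pt_lim (fun s => f (upd p a s)) t d.
Proof.
rewrite /has_partial upd_same.
have -> : (fun t0 => f (upd (upd p a t) a t0)) = (fun s => f (upd p a s)) by
  apply: functional_extensionality => s; rewrite upd_upd.
done.
Qed.

Definition box n (p : point n) eps (q : point n) := forall a, Rabs (q a - p a) < eps.

Lemma U_open n (V : R -> ('I_n -> R) -> Prop) : open_set_ux V ->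
  forall p, Uof V p -> exists eps, 0 < eps /\ forall q, box p eps q -> Uof V q.
Proof.
move=> hV p hp; have [eps [he H]] := hV _ _ hp.
exists eps; split => // q hq; apply: H; first exact: hq.
move=> e; exact: hq.
Qed.

Lemma box_upd n (p s : point n) eps a t :
  box p eps s -> Rabs (t - p a) < eps -> box p eps (upd s a t).
Proof.
move=> hs ht b; rewrite /upd; case E: (coord_eqb a b); last exact: hs.
by rewrite -(coord_eqb_true E).
Qed.

Lemma box_center n (p : point n) eps : 0 < eps -> box p eps p.
Proof. by move=> he a; rewrite Rminus_diag Rabs_R0. Qed.

Fixpoint setL n (q : point n) (L : list (coord n)) (r : point n) : point n :=
  match L with
  | nil => r
  | a :: L' => upd (setL q L' r) a (q a)
  end.

Lemma setL_prop n (S : point n -> Prop) (f : point n -> R) p eps q :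
  (forall r, box p eps r -> S r) ->
  (forall r, S r -> forall a, has_partial f a r 0) ->
  box p eps q ->
  forall L r, box p eps r ->
    box p eps (setL q L r) /\ f (setL q L r) = f r /\ (forall b, In b L -> setL q L r b = q b).
Proof.
move=> hS hd hq; elim => [|a L IH] r hr /=.
  by split => //.
have [h1 [h2 h3]] := IH r hr.
split; first exact: box_upd.
split.
  rewrite -h2 -{2}(upd_id (setL q L r) a).
  apply: (@const_interval (fun t => f (upd (setL q L r) a t)) (p a) eps).
  - move=> t ht; apply: partial_line; apply: hd; apply: hS; exact: box_upd.
  - exact: hq.
  - exact: h1.
move=> b [<-|hb]; first exact: upd_same.
rewrite /upd; case E: (coord_eqb a b); first by rewrite (coord_eqb_true E).
exact: h3.
Qed.

Lemma in_mem_In (T : eqType) (x : T) (s : list T) : x \in s -> In x s.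
Proof.
elim: s => //= y s IH; rewrite seq.in_cons => /orP [/eqP ->|h]; [by left | right; exact: IH].
Qed.

Definition allcoords n : list (coord n) := Cu :: Cv :: List.map Cx (enum 'I_n).

Lemma in_allcoords n (b : coord n) : In b (allcoords n).
Proof.
case: b => [| |e]; rewrite /allcoords /=; [by left | by right; left | right; right].
apply: in_map; apply: in_mem_In; exact: mem_enum.
Qed.

Lemma local_const n (S : point n -> Prop) (f : point n -> R) p eps :
  (forall r, box p eps r -> S r) ->
  (forall r, S r -> forall a, has_partial f a r 0) ->
  forall q, box p eps q -> f q = f p.
Proof.
move=> hS hd q hq.
have he : 0 < eps by have := hq Cu; have := Rabs_pos (q Cu - p Cu); lra.
have [_ [h2 h3]] := setL_prop hS hd hq (allcoords n) (box_center p he).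
rewrite -h2; congr f; apply: functional_extensionality => b.
by rewrite h3 //; apply: in_allcoords.
Qed.

Definition mkpt n (u : R) (x : 'I_n -> R) : point n :=
  fun a => match a with Cu => u | Cv => 0 | Cx e => x e end.

Lemma mkpt_upd n (p : point n) : mkpt (p Cu) (xof p) = upd p Cv 0.
Proof. by apply: functional_extensionality => -[| |e]. Qed.

Lemma zero_grad_const n (V : R -> ('I_n -> R) -> Prop) (f : point n -> R) :
  open_set_ux V -> connected_ux V ->
  (forall p, Uof V p -> forall a, has_partial f a p 0) ->
  exists k, forall p, Uof V p -> f p = k.
Proof.
move=> hVo hVc hd.
have vinv : forall p, Uof V p -> f p = f (mkpt (p Cu) (xof p)).
  move=> p hp; rewrite mkpt_upd -{1}(upd_id p Cv).
  apply: (@const_line (fun t => f (upd p Cv t))) => t; apply: partial_line; apply: hd; exact: hp.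
have loc : forall u x, V u x -> exists eps, 0 < eps /\ forall u' x',
    Rabs (u' - u) < eps -> (forall e, Rabs (x' e - x e) < eps) ->
    V u' x' /\ f (mkpt u' x') = f (mkpt u x).
  move=> u x hux.
  have [eps [he hU]] := U_open hVo (p := mkpt u x) hux.
  exists eps; split => // u' x' hu hx.
  have hb : box (mkpt u x) eps (mkpt u' x').
    by case => [| |e] //=; rewrite Rminus_diag Rabs_R0.
  split; first exact: (hU _ hb).
  apply: (local_const hU _ hb) => r hr a; exact: hd.
case: (classic (exists u x, V u x)) => [[u0 [x0 h0]]|hne]; last first.
  exists 0 => p hp; case: hne; by exists (p Cu), (xof p).
pose k := f (mkpt u0 x0).
exists k.
pose A := fun u x => V u x /\ f (mkpt u x) = k.
pose B := fun u x => V u x /\ f (mkpt u x) <> k.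
have hdis : (forall u x, V u x -> A u x) \/ (forall u x, V u x -> B u x).
  apply: hVc.
  - move=> u x [hux hk]; have [eps [he H]] := loc u x hux.
    exists eps; split => // u' x' hu hx; have [? ?] := H u' x' hu hx; split => //; congruence.
  - move=> u x [hux hk]; have [eps [he H]] := loc u x hux.
    exists eps; split => // u' x' hu hx; have [? ?] := H u' x' hu hx; split => //; congruence.
  - by move=> u x hux; case: (classic (f (mkpt u x) = k)) => ?; [left | right].
  - by move=> u x _ [_ h1] [_ h2].
case: hdis => [hA|hB].
- by move=> p hp; rewrite vinv //; case: (hA _ _ hp).
- by case: (hB _ _ h0).
Qed.
Set Implicit Arguments.
Unset Strict Implicit.

Lemma xsum_quad n (F A B C : 'I_n -> R) s s2 :
  (forall e, F e = A e + s * B e + s2 * C e) -> xsum F = xsum A + s * xsum B + s2 * xsum C.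
Proof.
move=> h; rewrite (xsum_ext h) !xsum_add !xsum_scal //.
Qed.

Lemma gval_expand n H W gm (p : point n) (Y Z : coord n -> R) :
  gval H W gm p Y Z =
  2 * H (p Cu) (xof p) * Y Cu * Z Cu + Y Cu * Z Cv + Y Cv * Z Cu
  + xsum (fun e => W e (p Cu) (xof p) * (Y Cu * Z (Cx e) + Y (Cx e) * Z Cu))
  + xsum (fun e => xsum (fun f => gm e f (p Cu) (xof p) * Y (Cx e) * Z (Cx f))).
Proof.
rewrite /gval /csum /=.
have e1 : xsum (fun e : 'I_n => 0 * Y Cv * Z (Cx e)) = 0.
  rewrite -[RHS](xsum0 n); apply: xsum_ext => e /=; ring.
have e2 : xsum (fun e : 'I_n =>
     W e (p Cu) (xof p) * Y (Cx e) * Z Cu + 0 * Y (Cx e) * Z Cv +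
     xsum (fun e0 : 'I_n => gm e e0 (p Cu) (xof p) * Y (Cx e) * Z (Cx e0))) =
  xsum (fun e => W e (p Cu) (xof p) * Y (Cx e) * Z Cu) +
  xsum (fun e => xsum (fun e0 : 'I_n => gm e e0 (p Cu) (xof p) * Y (Cx e) * Z (Cx e0))).
  rewrite -xsum_add; apply: xsum_ext => e /=; ring.
have e3 : xsum (fun e => W e (p Cu) (xof p) * (Y Cu * Z (Cx e) + Y (Cx e) * Z Cu)) =
  xsum (fun e => W e (p Cu) (xof p) * Y Cu * Z (Cx e)) + xsum (fun e => W e (p Cu) (xof p) * Y (Cx e) * Z Cu).
  rewrite -xsum_add; apply: xsum_ext => e /=; ring.
rewrite e1 e2 e3; ring.
Qed.

Lemma killing_facts n H W gm (X : coord n -> point n -> R) p DX Dg :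
  (forall c a b, has_partial (gcomp H W gm a b) c p (Dg c a b)) ->
  (forall a b, csum (fun c => X c p * Dg c a b + gcomp H W gm c b p * DX a c + gcomp H W gm a c p * DX b c) = 0) ->
  DX Cv Cu = 0 /\
  (forall e, xsum (fun f => gm f e (p Cu) (xof p) * DX Cv (Cx f)) + DX (Cx e) Cu = 0) /\
  2 * H (p Cu) (xof p) * DX Cv Cu + DX Cv Cv + xsum (fun f => W f (p Cu) (xof p) * DX Cv (Cx f)) + DX Cu Cu = 0.
Proof.
move=> hDg hE.
have Dg0 : forall c b, Dg c Cv b = 0.
  move=> c b; have := hDg c Cv b; rewrite /has_partial; case: b => [| |e] /= h; symmetry.
  - exact: (uniqueness_limite _ _ _ _ (derivable_pt_lim_const 1 (p c)) h).
  - exact: (uniqueness_limite _ _ _ _ (derivable_pt_lim_const 0 (p c)) h).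
  - exact: (uniqueness_limite _ _ _ _ (derivable_pt_lim_const 0 (p c)) h).
have hv := hE Cv Cv; have hx := fun e => hE Cv (Cx e); have hu := hE Cv Cu.
rewrite /csum /= in hv hx hu.
have k1 : DX Cv Cu = 0.
  rewrite (@xsum_ext _ _ (fun _ => 0)) ?xsum0 ?Dg0 in hv; first lra.
  by move=> e /=; rewrite Dg0; ring.
split => //; split.
- move=> e; have := hx e; rewrite !Dg0 k1.
  rewrite (@xsum_ext _ _ (fun f => gm f e (p Cu) (xof p) * DX Cv (Cx f))); first lra.
  by move=> f /=; rewrite Dg0; ring.
- move: hu; rewrite !Dg0 k1.
  rewrite (@xsum_ext _ _ (fun f => W f (p Cu) (xof p) * DX Cv (Cx f))); first lra.
  by move=> f /=; rewrite Dg0; ring.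
Qed.

Lemma gval_bilin n H W gm (p : point n) (U Y : coord n -> R) s :
  gval H W gm p (fun a => U a + s * Y a) (fun a => U a + s * Y a) =
  gval H W gm p U U + s * (gval H W gm p U Y + gval H W gm p Y U) + (s * s) * gval H W gm p Y Y.
Proof.
rewrite !gval_expand.
set hh := H (p Cu) (xof p).
have e1 : xsum (fun e => W e (p Cu) (xof p) * ((U Cu + s * Y Cu) * (U (Cx e) + s * Y (Cx e)) + (U (Cx e) + s * Y (Cx e)) * (U Cu + s * Y Cu))) =
  xsum (fun e => W e (p Cu) (xof p) * (U Cu * U (Cx e) + U (Cx e) * U Cu))
  + s * (xsum (fun e => W e (p Cu) (xof p) * (U Cu * Y (Cx e) + U (Cx e) * Y Cu))
        + xsum (fun e => W e (p Cu) (xof p) * (Y Cu * U (Cx e) + Y (Cx e) * U Cu)))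
  + (s * s) * xsum (fun e => W e (p Cu) (xof p) * (Y Cu * Y (Cx e) + Y (Cx e) * Y Cu)).
  rewrite -xsum_add; apply: xsum_quad => e; ring.
have e2 : xsum (fun e => xsum (fun f => gm e f (p Cu) (xof p) * (U (Cx e) + s * Y (Cx e)) * (U (Cx f) + s * Y (Cx f)))) =
  xsum (fun e => xsum (fun f => gm e f (p Cu) (xof p) * U (Cx e) * U (Cx f)))
  + s * (xsum (fun e => xsum (fun f => gm e f (p Cu) (xof p) * U (Cx e) * Y (Cx f)))
        + xsum (fun e => xsum (fun f => gm e f (p Cu) (xof p) * Y (Cx e) * U (Cx f))))
  + (s * s) * xsum (fun e => xsum (fun f => gm e f (p Cu) (xof p) * Y (Cx e) * Y (Cx f))).
  rewrite -xsum_add; apply: xsum_quad => e /=.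
  rewrite -xsum_add; apply: xsum_quad => f; ring.
rewrite e1 e2; ring.
Qed.

Lemma affine_line (f : R -> R) c : (forall t, derivable_pt_lim f t c) ->
  forall t t0, f t = f t0 + (t - t0) * c.
Proof.
move=> hd t t0.
have hg : forall t, derivable_pt_lim (fun t => f t - c * t) t 0.
  move=> x; have := derivable_pt_lim_minus f (mult_real_fct c id) x c (c * 1) (hd x)
    (derivable_pt_lim_scal id c x 1 (derivable_pt_lim_id x)).
  by rewrite Rmult_1_r Rminus_diag.
have := @const_line (fun t => f t - c * t) hg t t0 => /= h; lra.
Qed.
Set Implicit Arguments.
Unset Strict Implicit.

Lemma xsum_sub n (F G : 'I_n -> R) : xsum (fun e => F e - G e) = xsum F - xsum G.
Proof.
rewrite (@xsum_ext _ _ (fun e => F e + (-1) * G e)); last by move=> e; ring.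
rewrite xsum_add xsum_scal; ring.
Qed.

Lemma point_facts n (V : R -> ('I_n -> R) -> Prop) H W gm (X : coord n -> point n -> R) :
  open_set_ux V ->
  (forall u x, V u x -> forall y : 'I_n -> R, (exists e, y e <> 0) ->
      0 < xsum (fun e => xsum (fun f => gm e f u x * y e * y f))) ->
  killing_on (Uof V) (gcomp H W gm) X ->
  (forall p, Uof V p -> gval H W gm p (fun a => X a p) (fun a => X a p) <= 0) ->
  forall p, Uof V p -> exists DX : coord n -> coord n -> R,
    (forall a c, has_partial (X c) a p (DX a c)) /\
    DX Cv Cu = 0 /\ (forall f, DX Cv (Cx f) = 0) /\ (forall e, DX (Cx e) Cu = 0) /\
    DX Cv Cv = - DX Cu Cu /\ X Cu p * DX Cu Cu = 0.
Proof.
move=> hVo hgpos hK hcausal.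
have S1 : forall q, Uof V q -> forall t, X Cu (upd q Cv t) = X Cu q.
  move=> q hq t; rewrite -{2}(upd_id q Cv).
  apply: (@const_line (fun s => X Cu (upd q Cv s))) => s.
  have [DX [Dg [h1 [h2 h3]]]] := hK (upd q Cv s) hq.
  have [k1 _] := killing_facts h2 h3.
  rewrite -k1; apply: partial_line; exact: h1.
have S2 : forall q, Uof V q -> forall t a, a <> Cv -> forall d1 d2,
    has_partial (X Cu) a q d1 -> has_partial (X Cu) a (upd q Cv t) d2 -> d1 = d2.
  move=> q hq t a ha d1 d2 h1 h2.
  have [eps [he hU]] := U_open hVo hq.
  apply: (@deriv_unique_local (fun s => X Cu (upd q a s)) (fun s => X Cu (upd (upd q Cv t) a s)) (q a) d1 d2 eps he).
  - move=> s hs; rewrite upd_comm; last by move=> E; apply: ha.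
    rewrite S1 //; apply: hU; apply: box_upd => //; exact: box_center.
  - exact: h1.
  - by move: h2; rewrite /has_partial upd_other //; move=> E; apply: ha.
move=> p hp.
have [DX0 [Dg0 [h01 [h02 h03]]]] := hK p hp.
have [k01 [k02 k03]] := killing_facts h02 h03.
exists DX0; split => //.
have Sd : forall a t, derivable_pt_lim (fun s => X a (upd p Cv s)) t (DX0 Cv a).
  move=> a t.
  have [DX [Dg [h1 [h2 h3]]]] := hK (upd p Cv t) hp.
  have [k1 [k2 k3]] := killing_facts h2 h3.
  have k2' : forall e, xsum (fun f => gm f e (p Cu) (xof p) * DX Cv (Cx f)) + DX (Cx e) Cu = 0 := k2.
  have k3' : 2 * H (p Cu) (xof p) * DX Cv Cu + DX Cv Cv + xsum (fun f => W f (p Cu) (xof p) * DX Cv (Cx f)) + DX Cu Cu = 0 := k3.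
  have ex : forall e, DX (Cx e) Cu = DX0 (Cx e) Cu.
    move=> e; symmetry; exact: (S2 p hp t (Cx e) (ltac:(discriminate)) _ _ (h01 _ _) (h1 _ _)).
  have eu : DX Cu Cu = DX0 Cu Cu.
    symmetry; exact: (S2 p hp t Cu (ltac:(discriminate)) _ _ (h01 _ _) (h1 _ _)).
  have ef : forall f, DX Cv (Cx f) = DX0 Cv (Cx f).
    move=> f; have := @posdef_inj2 n (fun e f => gm e f (p Cu) (xof p)) (fun f => DX Cv (Cx f) - DX0 Cv (Cx f)) (hgpos _ _ hp).
    move=> h; apply: Rminus_diag_uniq; apply: h => e.
    have := k2' e; have := k02 e; rewrite ex => ha hb.
    have : xsum (fun f0 => gm f0 e (p Cu) (xof p) * DX Cv (Cx f0)) - xsum (fun f0 => gm f0 e (p Cu) (xof p) * DX0 Cv (Cx f0)) = 0 by lra.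
    move=> <-; rewrite -xsum_sub; apply: xsum_ext => g /=; ring.
  have ev : DX Cv Cv = DX0 Cv Cv.
    have : xsum (fun f => W f (p Cu) (xof p) * DX Cv (Cx f)) = xsum (fun f => W f (p Cu) (xof p) * DX0 Cv (Cx f)).
      by apply: xsum_ext => f; rewrite ef.
    move=> hw; rewrite k1 in k3'; rewrite k01 in k03; lra.
  apply: partial_line; case: a => [| |e].
  - rewrite k01 -k1; exact: h1.
  - rewrite -ev; exact: h1.
  - rewrite -ef; exact: h1.
have XL : forall t, (fun a => X a (upd p Cv t)) = (fun a => X a p + (t - p Cv) * DX0 Cv a).
  move=> t; apply: functional_extensionality => a.
  rewrite (@affine_line (fun s => X a (upd p Cv s)) (DX0 Cv a) (Sd a) t (p Cv)) upd_id //.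
pose U0 := fun a => X a p.
pose Y := DX0 Cv.
have hq : forall s, gval H W gm p U0 U0 + (gval H W gm p U0 Y + gval H W gm p Y U0) * s + gval H W gm p Y Y * (s * s) <= 0.
  move=> s; have := hcausal (upd p Cv (s + p Cv)) hp.
  rewrite XL; replace (s + p Cv - p Cv) with s by ring.
  have -> : gval H W gm (upd p Cv (s + p Cv)) = gval H W gm p by [].
  rewrite gval_bilin => h; rewrite /U0 /Y; lra.
have [hC hB] := quad_nonpos _ _ _ hq.
have CY : gval H W gm p Y Y = xsum (fun e => xsum (fun f => gm e f (p Cu) (xof p) * Y (Cx e) * Y (Cx f))).
  rewrite gval_expand /Y k01 (@xsum_ext _ _ (fun _ => 0)) ?xsum0; first ring.
  move=> e /=; ring.
have Y0 : forall f, DX0 Cv (Cx f) = 0.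
  move=> f; apply: NNPP => hne.
  have := hgpos _ _ hp (fun e => Y (Cx e)) (ex_intro _ f hne); rewrite -CY; lra.
have C0 : gval H W gm p Y Y = 0.
  rewrite CY -(xsum0 n); apply: xsum_ext => e; rewrite -(xsum0 n); apply: xsum_ext => f.
  by rewrite /Y Y0; ring.
have B0 := hB C0.
have BY : gval H W gm p U0 Y + gval H W gm p Y U0 = 2 * X Cu p * DX0 Cv Cv.
  rewrite !gval_expand /Y k01.
  rewrite !(@xsum_ext _ _ (fun _ => 0)) ?xsum0 /U0; first ring.
  1-4: move=> e; rewrite ?Y0; try (rewrite (@xsum_ext _ _ (fun _ => 0)) ?xsum0; last by move=> f; rewrite ?Y0; ring); ring.
have k3z : DX0 Cv Cv = - DX0 Cu Cu.
  move: k03; rewrite k01 (@xsum_ext _ _ (fun _ => 0)) ?xsum0; first lra.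
  by move=> f; rewrite Y0; ring.
split => //; split => //; split.
  move=> e; have := k02 e; rewrite (@xsum_ext _ _ (fun _ => 0)) ?xsum0; first lra.
  by move=> f; rewrite Y0; ring.
split => //.
rewrite BY k3z in B0; lra.
Qed.

Unset Implicit Arguments.

Lemma xsum_delta n (F : 'I_n -> R) j : xsum (fun i => F i * (if j == i then 1 else 0)) = F j.
Proof.
rewrite /xsum (bigD1 j) //= eqxx big1 ?Rmult_1_r ?Rplus_0_r //.
by move=> i hi; rewrite eq_sym (negbTE hi) Rmult_0_r.
Qed.

Theorem mainTheorem4
  (n : nat) (hn : (1 <= n)%nat)
  (V : R -> ('I_n -> R) -> Prop)
  (hVopen : open_set_ux V) (hVconn : connected_ux V)
  (H : R -> ('I_n -> R) -> R)
  (W : 'I_n -> R -> ('I_n -> R) -> R)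
  (gm : 'I_n -> 'I_n -> R -> ('I_n -> R) -> R)
  (m : 'I_n -> 'I_n -> R -> ('I_n -> R) -> R)
  (minv : 'I_n -> 'I_n -> R -> ('I_n -> R) -> R)
  (hH : smooth_on (Uof V) (lift_ux H))
  (hW : forall e, smooth_on (Uof V) (lift_ux (W e)))
  (hgm : forall e f, smooth_on (Uof V) (lift_ux (gm e f)))
  (hm : forall i e, smooth_on (Uof V) (lift_ux (m i e)))
  (hminv : forall i e, smooth_on (Uof V) (lift_ux (minv i e)))
  (hgpos : forall u x, V u x -> forall y : 'I_n -> R, (exists e, y e <> 0) ->
      0 < xsum (fun e => xsum (fun f => gm e f u x * y e * y f)))
  (hgm_m : forall u x, V u x -> forall e f,
      gm e f u x = xsum (fun i => m i e u x * m i f u x))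
  (hm_inv : forall u x, V u x -> forall i j,
      xsum (fun e => m i e u x * minv j e u x) = if i == j then 1 else 0)
  (X : coord n -> point n -> R)
  (hXsmooth : forall a, smooth_on (Uof V) (X a))
  (hKilling : killing_on (Uof V) (gcomp H W gm) X)
  (hcausal : forall p, Uof V p -> gval H W gm p (fun a => X a p) (fun a => X a p) <= 0) :
  let X1 := fun p => gval H W gm p (fun a => X a p) (@lvec n) in
  exists c : R,
    (forall p, Uof V p -> X1 p = c) /\
    exists (F2 : R -> ('I_n -> R) -> R) (F : 'I_n -> R -> ('I_n -> R) -> R),
      (forall p, Uof V p -> forall a,
         X a p = c * nvec H p a + F2 (p Cu) (xof p) * @lvec n a
                 + xsum (fun i => F i (p Cu) (xof p) * mvec W minv i p a)) /\
      (forall u x, V u x -> 2 * c * F2 u x + xsum (fun i => (F i u x) ^ 2) <= 0).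
Proof.
move=> X1.
have PF := point_facts hVopen hgpos hKilling hcausal.
have [k hk] : exists k, forall p, Uof V p -> X Cu p * X Cu p = k.
  apply: (zero_grad_const hVopen hVconn (f := fun q => X Cu q * X Cu q)).
  move=> p hp a; have [DX [hd [k1 [k2 [k3 [k4 k5]]]]]] := PF p hp.
  have := derivable_pt_lim_mult (fun s => X Cu (upd p a s)) (fun s => X Cu (upd p a s)) (p a) _ _ (hd a Cu) (hd a Cu).
  have e0 : DX a Cu * X Cu (upd p a (p a)) + X Cu (upd p a (p a)) * DX a Cu = 0.
    by rewrite upd_id; case: a => [| |e]; rewrite ?k1 ?k3; lra.
  rewrite e0 => h; exact: h.
have dz : forall c0, (forall q, Uof V q -> X Cu q = c0) -> forall p, Uof V p -> forall a d,
    has_partial (X Cu) a p d -> d = 0.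
  move=> c0 hc p hp a d h; have [eps [he hU]] := U_open hVopen hp.
  symmetry; apply: (@deriv_unique_local (fun _ => c0) (fun s => X Cu (upd p a s)) (p a) 0 d eps he) => //.
  - move=> s hs; symmetry; apply: hc; apply: hU; apply: box_upd => //; exact: box_center.
  - exact: derivable_pt_lim_const.
have [c hc] : exists c, forall q, Uof V q -> X Cu q = c.
  case: (Req_dec k 0) => hk0.
  - exists 0 => q hq; have := hk q hq; rewrite hk0 => h; nra.
  - apply: (zero_grad_const hVopen hVconn) => p hp a.
    have [DX [hd [k1 [k2 [k3 [k4 k5]]]]]] := PF p hp.
    have hne : X Cu p <> 0 by move=> h0; apply: hk0; rewrite -(hk p hp) h0; ring.
    have := hd a Cu; case: a => [| |e]; rewrite ?k1 ?k3 //.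
    have -> : DX Cu Cu = 0 by have := Rmult_integral _ _ k5; case.
    done.
have DV : forall p, Uof V p -> forall DX : coord n -> coord n -> R,
    (forall a c, has_partial (X c) a p (DX a c)) ->
    (forall a, DX Cv a = 0).
  move=> p hp DX hd; have [DX' [hd' [k1 [k2 [k3 [k4 k5]]]]]] := PF p hp.
  have eq : forall a c, DX a c = DX' a c.
    move=> a c0; apply: (uniqueness_limite _ _ _ _ (hd a c0) (hd' a c0)).
  have hu0 : DX' Cu Cu = 0 by apply: (dz c hc p hp Cu); exact: hd'.
  by case=> [| |e]; rewrite eq //; rewrite k4 hu0; ring.
have XV : forall p, Uof V p -> forall a t, X a (upd p Cv t) = X a p.
  move=> p hp a t; rewrite -{2}(upd_id p Cv).
  apply: (@const_line (fun s => X a (upd p Cv s))) => s.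
  have [DX [hd _]] := PF (upd p Cv s) hp.
  rewrite -(DV (upd p Cv s) hp DX hd a); apply: partial_line; exact: hd.
have XM : forall p, Uof V p -> forall a, X a (mkpt (p Cu) (xof p)) = X a p.
  by move=> p hp a; rewrite mkpt_upd XV.
pose F := fun i u x => xsum (fun e => m i e u x * X (Cx e) (mkpt u x)).
pose F2 := fun u x => X Cv (mkpt u x) + c * H u x + xsum (fun e => W e u x * X (Cx e) (mkpt u x)).
have Kid : forall u x, V u x -> forall e, xsum (fun i => F i u x * minv i e u x) = X (Cx e) (mkpt u x).
  move=> u x hux e.
  apply: Rminus_diag_uniq; move: e.
  apply: (@posdef_inj n (fun e f => gm e f u x) (fun i e => m i e u x) _ (hgm_m u x hux) (hgpos u x hux)).
  move=> j.
  rewrite (@xsum_ext _ _ (fun e => m j e u x * xsum (fun i => F i u x * minv i e u x) - m j e u x * X (Cx e) (mkpt u x))); last by move=> e; ring.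
  rewrite xsum_sub.
  have -> : xsum (fun e => m j e u x * xsum (fun i => F i u x * minv i e u x)) = F j u x.
    rewrite (@xsum_ext _ _ (fun e => xsum (fun i => m j e u x * (F i u x * minv i e u x)))); last by move=> e; rewrite xsum_scal.
    rewrite xsum_swap.
    rewrite (@xsum_ext _ _ (fun i => F i u x * (if j == i then 1 else 0))); first by rewrite xsum_delta.
    move=> i /=; rewrite -(hm_inv u x hux j i) -xsum_scal; apply: xsum_ext => e; ring.
  rewrite /F; ring.
exists c; split.
  move=> p hp; rewrite /X1 gval_expand /=.
  rewrite (@xsum_ext _ _ (fun _ => 0)); last by move=> e; ring.
  rewrite xsum0 (@xsum_ext _ _ (fun _ => 0)); last first.
    by move=> e; rewrite -[RHS](xsum0 n); apply: xsum_ext => f; ring.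
  rewrite xsum0 hc //; ring.
exists F2, F; split.
  move=> p hp a; have hux : V (p Cu) (xof p) := hp.
  case: a => [| |e] /=.
  - rewrite (@xsum_ext _ _ (fun _ => 0)) ?xsum0 ?hc //; last by move=> i; ring.
    ring.
  - rewrite /F2 XM //.
    have -> : xsum (fun i => F i (p Cu) (xof p) * - xsum (fun e => minv i e (p Cu) (xof p) * W e (p Cu) (xof p)))
       = - xsum (fun e => W e (p Cu) (xof p) * X (Cx e) (mkpt (p Cu) (xof p))).
      rewrite (@xsum_ext _ _ (fun i => (-1) * xsum (fun e => F i (p Cu) (xof p) * minv i e (p Cu) (xof p) * W e (p Cu) (xof p)))); last first.
        move=> i.
        transitivity (-1 * (F i (p Cu) (xof p) * xsum (fun e => minv i e (p Cu) (xof p) * W e (p Cu) (xof p)))); first ring.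
        congr (_ * _); rewrite -xsum_scal; apply: xsum_ext => e; ring.
      rewrite xsum_scal xsum_swap.
      rewrite (@xsum_ext _ _ (fun e => xsum (fun i => F i (p Cu) (xof p) * minv i e (p Cu) (xof p)) * W e (p Cu) (xof p))); last first.
        by move=> e; rewrite -xsum_scalr.
      rewrite (@xsum_ext _ _ (fun e => X (Cx e) (mkpt (p Cu) (xof p)) * W e (p Cu) (xof p))); last first.
        by move=> e; rewrite Kid.
      rewrite (@xsum_ext _ (fun e => X (Cx e) (mkpt (p Cu) (xof p)) * W e (p Cu) (xof p)) (fun e => W e (p Cu) (xof p) * X (Cx e) (mkpt (p Cu) (xof p)))); last by move=> e; ring.
      ring.
    ring.
  - rewrite Kid // XM //; ring.
move=> u x hux.
have hpu : Uof V (mkpt u x) := hux.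
have ex : xof (mkpt u x) = x by [].
have := hcausal (mkpt u x) hpu; rewrite gval_expand ex /= (hc _ hpu).
rewrite (@quadform n _ _ (fun e => X (Cx e) (mkpt u x)) (hgm_m u x hux)).
rewrite (@xsum_ext _ _ (fun e => 2 * c * (W e u x * X (Cx e) (mkpt u x)))); last by move=> e; ring.
rewrite xsum_scal /F2 /F => h; simpl in h |- *; lra.
Qed.
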